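(* Let $\Lambda\subset(0,\infty)$ with $D_{BM}(\Lambda)=+\infty$. Then there exists an increasing function $\Psi$ on $(0,\infty)$ with $\Psi(s)\nearrow+\infty$ as $s\to\infty$ which admits a family of intervals substantial for $\Psi$.
   Context: For an interval $I$, $n_\Lambda(I)$ denotes the number of points of $\Lambda$ in $I$. For $D>0$, a family of disjoint intervals $I_k=(a_k,b_k)$ with $0<a_1<b_1<a_2<b_2<\cdots$, $a_k\nearrow+\infty$, is called substantial for $D$ if $\frac{n_\Lambda(a_k,b_k)}{b_k-a_k}>D$ for all $k$ and $\sum_k\left(\frac{b_k-a_k}{b_k}\right)^2=+\infty$. The Beurling–Malliavin density of $\Lambda\subset(0,\infty)$ is $D_{BM}(\Lambda)=\sup\{D>0:\text{there exists a family substantial for } D\}$ (and $0$ if no such $D$ exists). For an increasing function $\Psi$ on $(0,\infty)$, a family of disjoint intervals $I_k=(a_k,b_k)\subset(0,\infty)$ is called substantial for $\Psi$ if $\frac{n_\Lambda(a_k,b_k)}{b_k-a_k}>\Psi(b_k-a_k)$ for all $k$ and $\sum_k\left(\frac{b_k-a_k}{b_k}\right)^2=+\infty$. *)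

(* Defs.v *)
From HB Require Import structures.
From mathcomp Require Import all_boot all_order all_algebra.
From mathcomp Require Import all_classical all_reals all_analysis.
From mathcomp Require Import finmap.
Set Implicit Arguments. Unset Strict Implicit. Unset Printing Implicit Defensive.
Import Order.TTheory GRing.Theory Num.Theory.
Import numFieldNormedType.Exports.
Local Open Scope classical_set_scope.
Local Open Scope ring_scope.

Definition n_count (R : realType) (Lam : set R) (a b : R) : \bar R :=
  if pselect (finite_set (Lam `&` `]a, b[)) is left _ then
    ((#|` fset_set (Lam `&` `]a, b[)|)%fset%:R)%:E
  else +oo%E.

Definition dens (R : realType) (Lam : set R) (a b : R) : \bar R :=
  (n_count Lam a b * ((b - a)^-1)%:E)%E.

Definition sq_sum_diverges (R : realType) (a b : nat -> R) : Prop :=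
  (\sum_(0 <= k <oo) ((((b k - a k) / b k) ^+ 2)%:E) = +oo)%E.

Definition substantial_D (R : realType) (Lam : set R) (D : R)
    (a b : nat -> R) : Prop :=
  [/\ 0 < a 0%N,
      (forall k, a k < b k /\ b k < a k.+1),
      (a k @[k --> \oo] --> +oo),
      (forall k, (D%:E < dens Lam (a k) (b k))%E) &
      sq_sum_diverges a b].

Definition D_BM (R : realType) (Lam : set R) : \bar R :=
  let S := [set D : R | 0 < D /\ exists a b, substantial_D Lam D a b] in
  if pselect (S !=set0) is left _ then ereal_sup [set D%:E | D in S]
  else 0%E.

Definition substantial_Psi (R : realType) (Lam : set R) (Psi : R -> R)
    (a b : nat -> R) : Prop :=
  [/\ (forall k, 0 <= a k /\ a k < b k),
      (forall i j, i <> j -> `]a i, b i[ `&` `]a j, b j[ = set0),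
      (forall k, ((Psi (b k - a k))%:E < dens Lam (a k) (b k))%E) &
      sq_sum_diverges a b].

(* Main.v *)
Require Import Defs.
From HB Require Import structures.
From mathcomp Require Import all_boot all_order all_algebra.
From mathcomp Require Import all_classical all_reals all_analysis.
From mathcomp Require Import zify ring lra.
Import Order.TTheory GRing.Theory Num.Theory.
Import numFieldNormedType.Exports.
Local Open Scope classical_set_scope.
Local Open Scope ring_scope.

Lemma sum_le_min (f : nat -> bool) k T :
  (forall m, (k <= m)%N -> f m = false) -> (\sum_(m < T) f m <= minn T k)%N.
Proof.
move=> fk; elim: T => [|T IH]; first by rewrite big_ord0.
rewrite big_ord_recr /=.
case: (ltnP T k) => h.
  by move: IH; case: (f T) => /=; lia.
rewrite fk //= addn0.
apply: leq_trans IH _; lia.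
Qed.

Lemma sum_ge_min (f : nat -> bool) K T :
  (forall m, (m < K)%N -> f m) -> (minn T K <= \sum_(m < T) f m)%N.
Proof.
move=> fK; elim: T => [|T IH]; first by rewrite big_ord0 min0n.
rewrite big_ord_recr /=.
case: (ltnP T K) => h.
  by rewrite fK //=; apply: leq_trans _ (leq_add IH (leqnn 1)); lia.
by apply: leq_trans _ (leq_addr _ _); apply: leq_trans _ IH; lia.
Qed.

Lemma sum_mono (f g : nat -> bool) T T' :
  (forall m, f m -> g m) -> (T <= T')%N ->
  (\sum_(m < T) f m <= \sum_(m < T') g m)%N.
Proof.
move=> fg; elim: T' => [|T' IH].
  by rewrite leqn0 => /eqP ->; rewrite !big_ord0.
rewrite leq_eqVlt => /orP[/eqP ->|].
  apply: leq_sum => i _; case E: (f i) => //; by rewrite fg.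
rewrite ltnS => /IH h; rewrite big_ord_recr /=; exact: leq_trans h (leq_addr _ _).
Qed.


Section Construction.
Variable R : realType.
Variables (A B : nat -> nat -> R) (st : nat -> R -> nat).
Hypothesis Hfam : forall n j, 0 < A n j /\ A n j < B n j /\ B n j < A n j.+1.
Hypothesis Hst : forall n P, P < A n (st n P).

Definition term n j := ((B n j - A n j) / B n j) ^+ 2.
Definition nxt (s : nat * nat * R) : nat * nat * R :=
  let: (n, j, acc) := s in
  if 1 <= acc then (n.+1, st n.+1 (B n j), term n.+1 (st n.+1 (B n j)))
  else (n, j.+1, acc + term n j.+1).
Definition state k := iter k nxt (0%N, st 0 0, term 0 (st 0 0)).
Definition NN k := (state k).1.1.
Definition JJ k := (state k).1.2.
Definition Acc k := (state k).2.
Definition ga k := A (NN k) (JJ k).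
Definition gb k := B (NN k) (JJ k).
Definition gt k := term (NN k) (JJ k).

Lemma stepP k :
  (1 <= Acc k /\ NN k.+1 = (NN k).+1 /\ JJ k.+1 = st (NN k).+1 (gb k)
     /\ Acc k.+1 = gt k.+1) \/
  (Acc k < 1 /\ NN k.+1 = NN k /\ JJ k.+1 = (JJ k).+1 /\ Acc k.+1 = Acc k + gt k.+1).
Proof.
rewrite /gt /gb /Acc /NN /JJ /state iterS.
case: (iter k nxt _) => [[n j] acc] /=.
case: ifP => h /=; [left | right]; split => //.
by rewrite ltNge h.
Qed.

Lemma term_ge0 n j : 0 <= term n j.
Proof. by rewrite /term sqr_ge0. Qed.

Lemma gt_ge0 k : 0 <= gt k.
Proof. exact: term_ge0. Qed.

Lemma Acc_ge0 k : 0 <= Acc k.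
Proof.
elim: k => [|k IH]; first exact: term_ge0.
case: (stepP k) => [[_ [_ [_ ->]]]|[_ [_ [_ ->]]]]; first exact: gt_ge0.
by rewrite addr_ge0 // gt_ge0.
Qed.

Lemma gab k : 0 < ga k /\ ga k < gb k /\ gb k < ga k.+1.
Proof.
have [h1 [h2 _]] := Hfam (NN k) (JJ k).
split => //; split => //.
rewrite /gb /ga.
case: (stepP k) => [[_ [-> [-> _]]]|[_ [-> [-> _]]]].
  exact: Hst.
exact: (Hfam _ _).2.2.
Qed.

Lemma chain i j : (i < j)%N -> gb i < ga j.
Proof.
elim: j => [//|j IH]; rewrite ltnS leq_eqVlt => /orP[/eqP ->|lt].
  exact: (gab j).2.2.
have [_ [h1 h2]] := gab j.
exact: lt_trans (IH lt) (lt_trans h1 h2).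
Qed.

Lemma disj i j : i <> j -> `]ga i, gb i[ `&` `]ga j, gb j[ = set0.
Proof.
wlog lt : i j / (i < j)%N.
  move=> W ij; case: (ltngtP i j) => h; first exact: W.
    by rewrite setIC; apply: W => // ?; subst.
  by [].
move=> _; apply/seteqP; split => // x [].
rewrite /= !in_itv /= => /andP[_ h1] /andP[h2 _].
have := @chain i j lt; lra.
Qed.

Lemma NN_S k : (NN k <= NN k.+1)%N.
Proof. by case: (stepP k) => [[_ [-> _]]|[_ [-> _]]]. Qed.

Lemma NN_mono i j : (i <= j)%N -> (NN i <= NN j)%N.
Proof.
elim: j => [|j IH]; first by rewrite leqn0 => /eqP ->.
rewrite leq_eqVlt => /orP[/eqP ->//|]; rewrite ltnS => /IH h.
exact: leq_trans h (NN_S j).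
Qed.

Lemma invariant k : (NN k)%:R + Acc k <= \sum_(i < k.+1) gt i.
Proof.
elim: k => [|k IH]; first by rewrite big_ord1 add0r.
rewrite big_ord_recr /=.
case: (stepP k) => [[h1 [-> [_ ->]]]|[_ [-> [_ ->]]]].
  rewrite -natr1; lra.
lra.
Qed.

Lemma series_sup (f : nat -> R) : (forall t, 0 <= f t) ->
  (\sum_(0 <= t <oo) (f t)%:E = ereal_sup (range (fun M => \sum_(0 <= t < M) (f t)%:E)))%E.
Proof.
move=> f0; apply/cvg_lim => //; apply: ereal_nondecreasing_cvgn.
by apply: ereal_nondecreasing_series => ? _ _; rewrite lee_fin.
Qed.

Lemma series_bounded (f : nat -> R) (C : R) : (forall t, 0 <= f t) ->
  (forall M, \sum_(0 <= t < M) f t <= C) ->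
  (\sum_(0 <= t <oo) (f t)%:E <= C%:E)%E.
Proof.
move=> f0 fC; rewrite series_sup //; apply: ge_ereal_sup => _ [M _ <-].
by rewrite sumEFin lee_fin.
Qed.

Hypothesis Hdiv : forall n, (\sum_(0 <= t <oo) (term n t)%:E = +oo)%E.

Lemma unbounded k : exists k', (NN k < NN k')%N.
Proof.
apply/not_existsP => H.
set n := NN k; set j0 := JJ k; set a0 := Acc k.
have step i : Acc (k + i) < 1 /\ NN (k + i).+1 = NN (k + i) /\
    JJ (k + i).+1 = (JJ (k + i)).+1 /\ Acc (k + i).+1 = Acc (k + i) + gt (k + i).+1.
  case: (stepP (k + i)) => [[_ [E _]]|//].
  exfalso; apply: (H (k + i).+1); rewrite E.
  have := @NN_mono k (k + i) (leq_addr _ _); lia.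
have claim i : NN (k + i) = n /\ JJ (k + i) = (j0 + i)%N /\
   Acc (k + i) = a0 + \sum_(j0.+1 <= t < (j0 + i).+1) term n t.
  elim: i => [|i [IH1 [IH2 IH3]]].
    by rewrite !addn0 big_geq // addr0.
  have [_ [E1 [E2 E3]]] := step i.
  rewrite !addnS E1 E2 E3 /gt E1 E2 IH1 IH2 IH3; split => //; split => //.
  rewrite [in RHS]big_nat_recr /=; last by lia.
  by rewrite addrA.
have small i : \sum_(j0.+1 <= t < (j0 + i).+1) term n t < 1.
  have [h _] := step i; have [_ [_ E]] := claim i.
  have := Acc_ge0 k; rewrite -/a0; move: h; rewrite E; lra.
have bd M : \sum_(0 <= t < M) term n t <= \sum_(0 <= t < j0.+1) term n t + 1.
  apply: (@le_trans _ _ (\sum_(0 <= t < (j0 + M).+1) term n t)).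
    rewrite [X in _ <= X](big_cat_nat (n := M)) //=; last by lia.
    by rewrite lerDl sumr_ge0 // => *; exact: term_ge0.
  rewrite [X in X <= _](big_cat_nat (n := j0.+1)) //=; last by lia.
  by rewrite lerD2l ltW // small.
have := @series_bounded (term n) _ (@term_ge0 n) bd.
by rewrite Hdiv.
Qed.

Lemma NN_unb m : exists k, (m <= NN k)%N.
Proof.
elim: m => [|m [k hk]]; first by exists 0%N.
have [k' hk'] := unbounded k; exists k'; lia.
Qed.

Lemma global_div : (\sum_(0 <= t <oo) (gt t)%:E = +oo)%E.
Proof.
rewrite series_sup; last exact: gt_ge0.
set S := ereal_sup _.
have H r : (r%:E <= S)%E.
  apply: le_ereal_sup_tmp.
  have [m hm] : exists m : nat, r <= m%:R.
    by exists (Num.truncn r).+1; exact/ltW/truncnS_gt.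
  have [k hk] := NN_unb m.
  exists (\sum_(0 <= t < k.+1) (gt t)%:E); first by exists k.+1.
  rewrite sumEFin lee_fin big_mkord.
  apply: le_trans (invariant k).
  have := Acc_ge0 k; have : m%:R <= (NN k)%:R :> R by rewrite ler_nat.
  lra.
case E: S => [r| |] //.
  by have := H (r + 1)%R; rewrite E lee_fin => h; exfalso; move: h; apply/negP; rewrite -ltNge ltrDl ltr01.
by have := H 0; rewrite E.
Qed.

Lemma gb_lt i j : (i < j)%N -> gb i < gb j.
Proof. by move=> h; have := @chain i j h; have := (gab j).2.1; lra. Qed.

Definition cnt (s : R) : nat := (\sum_(m < Num.truncn s) nat_of_bool (gb m < s)%R)%N.
Definition Psi (s : R) : R := s / (1 + s) + (NN (cnt s))%:R.

Lemma cnt_mono s t : s <= t -> (cnt s <= cnt t)%N.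
Proof.
move=> hst; rewrite /cnt; apply: (@sum_mono (fun m => (gb m < s)%R) (fun m => (gb m < t)%R)); last exact: le_truncn.
by move=> m h; apply: lt_le_trans hst.
Qed.

Lemma cnt_len k : (cnt (gb k - ga k) <= k)%N.
Proof.
rewrite /cnt; apply: leq_trans (@sum_le_min (fun m => (gb m < gb k - ga k)%R) k _ _) _; last by apply: geq_minr.
move=> m km; apply/negbTE; rewrite -leNgt.
have := (gab k).1; have : gb k <= gb m.
  by move: km; rewrite leq_eqVlt => /orP[/eqP ->//|/gb_lt/ltW].
lra.
Qed.

Lemma cnt_big K : exists c, forall s, c < s -> (K <= cnt s)%N.
Proof.
exists (Num.max (K%:R) (gb K)) => s; rewrite gt_max => /andP[h1 h2].
rewrite /cnt; apply: leq_trans (@sum_ge_min (fun m => (gb m < s)%R) K _ _).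
  have : (K <= Num.truncn s)%N.
    by rewrite truncn_ge_nat ?ltW //; apply: le_lt_trans h1.
  lia.
by move=> m mK; apply: lt_trans h2; apply: gb_lt.
Qed.

Lemma frac_lt1 (x : R) : 0 < x -> x / (1 + x) < 1.
Proof. move=> x0; rewrite ltr_pdivrMr; lra. Qed.

Lemma frac_ge0 (x : R) : 0 < x -> 0 <= x / (1 + x).
Proof. move=> x0; apply: divr_ge0; lra. Qed.

Lemma frac_lt (x y : R) : 0 < x -> x < y -> x / (1 + x) < y / (1 + y).
Proof.
move=> x0 xy; rewrite -subr_gt0.
have -> : y / (1 + y) - x / (1 + x) = (y - x) / ((1 + x) * (1 + y)).
  by field; apply/andP; split; apply/lt0r_neq0; lra.
by apply: divr_gt0; [lra | apply: mulr_gt0; lra].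
Qed.

Lemma Psi_len k : Psi (gb k - ga k) < (NN k).+1%:R.
Proof.
rewrite /Psi -natr1.
have [h1 [h2 _]] := gab k.
have := @frac_lt1 (gb k - ga k) ltac:(lra); have : (NN (cnt (gb k - ga k)))%:R <= (NN k)%:R :> R.
  by rewrite ler_nat; apply: NN_mono; apply: cnt_len.
lra.
Qed.

Lemma Psi_incr s t : 0 < s -> s < t -> Psi s < Psi t.
Proof.
move=> s0 st0; rewrite /Psi.
have := @frac_lt s t s0 st0; have : (NN (cnt s))%:R <= (NN (cnt t))%:R :> R.
  by rewrite ler_nat; apply: NN_mono; apply: cnt_mono; apply: ltW.
lra.
Qed.

Lemma Psi_cvg : Psi x @[x --> +oo] --> +oo.
Proof.
apply/cvgryPge => M.
have [m hm] : exists m : nat, M <= m%:R.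
  by exists (Num.truncn M).+1; exact/ltW/truncnS_gt.
have [k hk] := NN_unb m.
have [c hc] := cnt_big k.
exists (Num.max c 0); split; first exact: num_real.
move=> x; rewrite gt_max => /andP[h1 h2].
rewrite /Psi.
have := @frac_ge0 x h2; have : (m <= NN (cnt x))%N.
  by apply: leq_trans hk _; apply: NN_mono; apply: hc.
rewrite -(ler_nat R); lra.
Qed.

End Construction.

Theorem lemma3p2 (R : realType) (Lam : set R) :
  Lam `<=` `]0, +oo[ ->
  D_BM Lam = +oo%E ->
  exists Psi : R -> R,
    (forall s t : R, 0 < s -> s < t -> Psi s < Psi t) /\
    (Psi x @[x --> +oo] --> +oo) /\
    exists a b : nat -> R, substantial_Psi Lam Psi a b.
Proof.
move=> Hpos HD.
have fam : forall n : nat, exists ab : (nat -> R) * (nat -> R),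
    substantial_D Lam (n.+1)%:R ab.1 ab.2.
  move: HD; rewrite /D_BM; case: pselect => [ne|_ //] HD n.
  have : ((((n.+1)%:R : R))%:E < +oo)%E by rewrite ltry.
  rewrite -HD.
  move/ereal_sup_gt => [_ [D [D0 [a [b sub]]] <-]]; rewrite lte_fin => nD.
  exists (a, b); case: sub => h1 h2 h3 h4 h5; split => // k.
  by apply: lt_trans (h4 k); rewrite lte_fin.
have [f Hf] := choice fam.
pose A n := (f n).1; pose B n := (f n).2.
have Hfam : forall n j, 0 < A n j /\ A n j < B n j /\ B n j < A n j.+1.
  move=> n j; have [h1 h2 _ _ _] := Hf n.
  split; last exact: h2.
  elim: j => [//|j IH]; exact: lt_trans IH (lt_trans (h2 j).1 (h2 j).2).
have /choice[st0 Hst0] : forall np : nat * R, exists j, np.2 < A np.1 j.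
  move=> [n P]; have [_ _ h3 _ _] := Hf n.
  have [N _ HN] := (proj1 (cvgryPge _) h3) (P + 1).
  by exists N; have := HN N (leqnn N); rewrite /A /=; lra.
pose st n P := st0 (n, P).
have Hst : forall n P, P < A n (st n P) by move=> n P; exact: (Hst0 (n, P)).
have Hdiv : forall n, (\sum_(0 <= t <oo) (term R A B n t)%:E = +oo)%E.
  by move=> n; have [_ _ _ _ h5] := Hf n; exact: h5.
exists (Psi R A B st); split.
  move=> s t; exact: (@Psi_incr R A B st s t).
split.
  exact: (@Psi_cvg R A B st Hfam Hst Hdiv).
exists (ga R A B st), (gb R A B st); split.
- move=> k; have [h1 [h2 _]] := @gab R A B st Hfam Hst k; split => //; exact: ltW.
- exact: (@disj R A B st Hfam Hst).
- move=> k; apply: (@lt_trans _ _ ((NN R A B st k).+1%:R)%:E).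
    rewrite lte_fin; exact: (@Psi_len R A B st Hfam Hst k).
  have [_ _ _ h4 _] := Hf (NN R A B st k); exact: h4.
- have Hg := (@global_div R A B st Hdiv); exact Hg.
Qed.
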